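(* For all $m\ge2$, $n\ge2$ there exists a proportional mechanism $(A,q)$ for the goods allocation problem over the set $\mathcal{N}$ of normalized instances such that $\min_{i\in[m]}v_i(A(v)_i)=\mathrm{OPT}(v)$ for every $v\in\mathcal{N}$.
   Context: Goods allocation: $m$ agents $[m]$, $n$ goods $[n]$; an instance is a matrix $v\in\mathbb{R}_{\ge0}^{m\times n}$, $v_i(S)=\sum_{j\in S}v_{i,j}$. Normalized instances: $\mathcal{N}=\{v\in\mathbb{R}_{\ge0}^{m\times n}:\exists C\text{ with }v_i([n])=C\ \forall i\in[m]\}$. An allocation is a tuple of pairwise disjoint subsets of $[n]$ with union $[n]$. A mechanism $(A,q)$ assigns to each instance an allocation $A(v)$ and transfers $q(v)\in\mathbb{R}^m$; it is proportional if for every instance $v$ and $i\in[m]$: $v_i(A_i)-q_i\ge\frac1m\sum_{j\in[m]}(v_i(A_j)-q_j)$. $\mathrm{OPT}(v)=\max_X\min_{i\in[m]}v_i(X_i)$ over all allocations $X$. *)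

(* Defs.v *)
From HB Require Import structures.
From mathcomp Require Import all_boot all_order all_algebra.
From mathcomp Require Import reals.
Set Implicit Arguments. Unset Strict Implicit. Unset Printing Implicit Defensive.
Import Order.TTheory GRing.Theory Num.Theory.
Local Open Scope ring_scope.

Section Defs.
Variables (R : realType) (m n : nat).

(* An instance is an m x n matrix v; agent i values good j at v i j. *)
Definition val (v : 'M[R]_(m, n)) (i : 'I_m) (S : {set 'I_n}) : R :=
  \sum_(j in S) v i j.

Definition normalized (v : 'M[R]_(m, n)) : Prop :=
  (forall i j, 0 <= v i j) /\ exists C : R, forall i, val v i setT = C.

Definition is_allocation (X : {ffun 'I_m -> {set 'I_n}}) : bool :=
  [forall i, forall j, (i != j) ==> [disjoint X i & X j]]
  && (\bigcup_(i < m) X i == setT).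

Definition seqmin (s : seq R) : R := foldr Num.min (head 0 s) s.
Definition seqmax (s : seq R) : R := foldr Num.max (head 0 s) s.

Definition egal (v : 'M[R]_(m, n)) (X : {ffun 'I_m -> {set 'I_n}}) : R :=
  seqmin [seq val v i (X i) | i <- enum 'I_m].

Definition OPT (v : 'M[R]_(m, n)) : R :=
  seqmax [seq egal v X | X <- enum [pred X : {ffun 'I_m -> {set 'I_n}} | is_allocation X]].

Definition proportional_at (A : 'M[R]_(m, n) -> {ffun 'I_m -> {set 'I_n}})
    (q : 'M[R]_(m, n) -> 'I_m -> R) (v : 'M[R]_(m, n)) : Prop :=
  forall i : 'I_m,
    val v i (A v i) - q v i >=
    m%:R^-1 * \sum_(j < m) (val v i (A v j) - q v j).

End Defs.

(* Main.v *)
Require Import Defs.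
From HB Require Import structures.
From mathcomp Require Import all_boot all_order all_algebra perm.
From mathcomp Require Import reals.
Import Order.TTheory GRing.Theory Num.Theory.
Lemma cycle_perm (T : finType) (f : T -> T) (x0 : T) :
  exists (g : {perm T}) (x : T), g x = f x /\ forall j, g j = j \/ g j = f j.
Proof.
have Pex : exists p, (0 < p) && [exists y, iter p f y == y].
  pose h (k : 'I_#|T|.+1) := iter k f x0.
  have : ~~ injectiveb h.
    by apply/negP => /injectiveP /leq_card; rewrite card_ord ltnn.
  case/injectivePn => a [b] ab hab.
  wlog lab : a b ab hab / (a < b)%N.
    move=> W; case: (ltngtP a b) => [l|l|e]; first exact: (W a b).
      by apply: (W b a) => //; rewrite eq_sym.
    by move: ab; rewrite (val_inj e) eqxx.
  exists (b - a)%N; rewrite subn_gt0 lab /=; apply/existsP; exists (h a).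
  by move: hab; rewrite /h => hab; rewrite -iterD subnK ?(ltnW lab) // hab.
case: (ex_minnP Pex) => p /andP [ppos /existsP [y /eqP Hy]] pmin.
have distinct k l : (k < p)%N -> (l < p)%N -> iter k f y = iter l f y -> k = l.
  wlog lkl : k l / (k <= l)%N.
    move=> W hk hl e; case: (leqP k l) => h; first exact: W.
    by symmetry; apply: W => //; apply: ltnW.
  move=> hk hl e; apply/eqP; rewrite eqn_leq lkl /=; rewrite leqNgt; apply/negP => klt.
  have : (p <= l - k)%N.
    apply: pmin; rewrite subn_gt0 klt /=; apply/existsP; exists (iter k f y).
    by rewrite -iterD subnK // e.
  by rewrite leqNgt (leq_ltn_trans (leq_subr _ _) hl).
pose cyc j := [exists k : 'I_p, iter k f y == j].
have fcyc j : cyc j -> cyc (f j).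
  case/existsP => k /eqP <-; apply/existsP.
  case: (ltnP k.+1 p) => h; first by exists (Ordinal h).
  exists (Ordinal ppos); apply/eqP => /=; rewrite -iterS.
  have -> : k.+1 = p by apply/eqP; rewrite eqn_leq h ltn_ord.
  by rewrite Hy.
pose g0 j := if cyc j then f j else j.
have g0inj : injective g0.
  move=> a b; rewrite /g0.
  have [ca|ca] := boolP (cyc a); have [cb|cb] := boolP (cyc b); last by [].
  2: by move=> e; move: (fcyc _ ca); rewrite e (negbTE cb).
  2: by move=> e; move: (fcyc _ cb); rewrite -e (negbTE ca).
  move: ca cb => /existsP [k /eqP <-] /existsP [l /eqP <-].
  rewrite -!iterS => e.
  have ek z : (z < p)%N -> iter z.+1 f y = iter (z.+1 %% p) f y.
    move=> hz; case: (ltnP z.+1 p) => h; first by rewrite modn_small.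
    have -> : z.+1 = p by apply/eqP; rewrite eqn_leq h hz.
    by rewrite modnn Hy.
  rewrite (ek k (ltn_ord k)) (ek l (ltn_ord l)) in e.
  have := distinct _ _ (ltn_pmod _ ppos) (ltn_pmod _ ppos) e.
  move/eqP; rewrite -[k.+1]addn1 -[l.+1]addn1 eqn_modDr !modn_small ?ltn_ord // => /eqP ekl.
  by rewrite ekl.
exists (perm g0inj), y; split.
  rewrite permE /g0; have -> // : cyc y.
  by apply/existsP; exists (Ordinal ppos).
by move=> j; rewrite permE /g0; case: (cyc j); [right|left].
Qed.

Local Open Scope ring_scope.


Section Aux.
Variable R : realType.

Lemma foldr_max_mem (d : R) l : foldr Num.max d l \in d :: l.
Proof.
elim: l => [|a l IH] /=; first by rewrite inE.
rewrite /Num.max; case: ifP => _; rewrite !inE ?eqxx ?orbT //.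
by move: IH; rewrite !inE => /orP [->|->]; rewrite ?orbT.
Qed.

Lemma foldr_max_ub (d : R) l x : x \in d :: l -> x <= foldr Num.max d l.
Proof.
elim: l => [|a l IH] /=; first by rewrite inE => /eqP ->.
move=> H; rewrite le_max.
have [/eqP->|xa] := boolP (x == a); first by rewrite lexx.
apply/orP; right; apply: IH; move: H; rewrite !inE (negbTE xa) /=.
by case/orP => ->; rewrite ?orbT.
Qed.

Lemma foldr_min_mem (d : R) l : foldr Num.min d l \in d :: l.
Proof.
elim: l => [|a l IH] /=; first by rewrite inE.
rewrite /Num.min; case: ifP => _; rewrite !inE ?eqxx ?orbT //.
by move: IH; rewrite !inE => /orP [->|->]; rewrite ?orbT.
Qed.

Lemma foldr_min_lb (d : R) l x : x \in d :: l -> foldr Num.min d l <= x.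
Proof.
elim: l => [|a l IH] /=; first by rewrite inE => /eqP ->.
move=> H; rewrite ge_min.
have [/eqP->|xa] := boolP (x == a); first by rewrite lexx.
apply/orP; right; apply: IH; move: H; rewrite !inE (negbTE xa) /=.
by case/orP => ->; rewrite ?orbT.
Qed.

Lemma seqmax_mem (s : seq R) : s != [::] -> seqmax s \in s.
Proof.
case: s => [//|a l] _; rewrite /seqmax /=.
have := foldr_max_mem a (a :: l); rewrite /= !inE.
by case/or3P => [/eqP->|/eqP->|->]; rewrite ?eqxx ?orbT.
Qed.

Lemma seqmax_ub (s : seq R) x : x \in s -> x <= seqmax s.
Proof.
case: s => [//|a l] xs; rewrite /seqmax /=.
by apply: (@foldr_max_ub a (a :: l)); rewrite inE xs orbT.
Qed.

Lemma seqmin_mem (s : seq R) : s != [::] -> seqmin s \in s.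
Proof.
case: s => [//|a l] _; rewrite /seqmin /=.
have := foldr_min_mem a (a :: l); rewrite /= !inE.
by case/or3P => [/eqP->|/eqP->|->]; rewrite ?eqxx ?orbT.
Qed.

Lemma seqmin_lb (s : seq R) x : x \in s -> seqmin s <= x.
Proof.
case: s => [//|a l] xs; rewrite /seqmin /=.
by apply: (@foldr_min_lb a (a :: l)); rewrite inE xs orbT.
Qed.

Variables m n : nat.

Lemma egal_le (v : 'M[R]_(m, n)) (X : {ffun 'I_m -> {set 'I_n}}) (i : 'I_m) : egal v X <= Defs.val v i (X i).
Proof. by apply: seqmin_lb; apply: map_f; rewrite mem_enum. Qed.

Lemma egal_ge (v : 'M[R]_(m, n)) (X : {ffun 'I_m -> {set 'I_n}}) t : (0 < m)%N ->
  (forall i, t <= Defs.val v i (X i)) -> t <= egal v X.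
Proof.
move=> m0 H; rewrite /egal.
have : seqmin [seq Defs.val v i (X i) | i <- enum 'I_m] \in [seq Defs.val v i (X i) | i <- enum 'I_m].
  apply: seqmin_mem; rewrite -size_eq0 size_map size_enum_ord -lt0n //.
by case/mapP => i _ ->.
Qed.

Lemma val_alloc (v : 'M[R]_(m, n)) (X : {ffun 'I_m -> {set 'I_n}}) (i : 'I_m) : is_allocation X ->
  \sum_(j < m) Defs.val v i (X j) = Defs.val v i setT.
Proof.
case/andP => /forallP dis /eqP U.
have dis' : forall a b : 'I_m, a != b -> [disjoint X a & X b].
  by move=> a b ab; move/forallP: (dis a) => /(_ b); rewrite ab.
have := partition_disjoint_bigcup (@GRing.add R) (fun g => v i g) dis'.
by rewrite /Defs.val U => ->.
Qed.

End Aux.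

Theorem mainTheorem9 (R : realType) (m n : nat) :
  (2 <= m)%N -> (2 <= n)%N ->
  exists (A : 'M[R]_(m, n) -> {ffun 'I_m -> {set 'I_n}})
         (q : 'M[R]_(m, n) -> 'I_m -> R),
    (forall v, normalized v -> is_allocation (A v)) /\
    (forall v, normalized v -> proportional_at A q v) /\
    (forall v, normalized v -> egal v (A v) = OPT v).
Proof.
move=> m2 _.
have m0 : (0 < m)%N by apply: leq_trans m2.
pose i0 : 'I_m := Ordinal m0.
pose Xall : {ffun 'I_m -> {set 'I_n}} := [ffun i => if i == i0 then setT else set0].
have allocXall : is_allocation Xall.
  apply/andP; split.
    apply/forallP => i; apply/forallP => j; apply/implyP => ij; rewrite !ffunE.
    case: (i =P i0) => [ei|_]; last by rewrite -setI_eq0 set0I.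
    case: (j =P i0) => [ej|_]; last by rewrite -setI_eq0 setI0.
    by move: ij; rewrite ei ej eqxx.
  rewrite eqEsubset subsetT /=.
  apply: (subset_trans _ (bigcup_sup i0 _)) => //.
  by rewrite ffunE eqxx.
pose S (v : 'M[R]_(m, n)) (X : {ffun 'I_m -> {set 'I_n}}) := \sum_(i < m) Defs.val v i (X i).
pose X0 (v : 'M[R]_(m, n)) := Order.arg_max Xall (@is_allocation m n) (egal v).
pose A (v : 'M[R]_(m, n)) := Order.arg_max (X0 v)
   (fun X => is_allocation X && (egal v X == egal v (X0 v))) (S v).
have X0P v : is_allocation (X0 v) /\ forall X, is_allocation X -> egal v X <= egal v (X0 v).
  rewrite /X0; case: (arg_maxP (egal v) allocXall) => X HX Hmax.
  by split => // Y HY; apply: Hmax.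
have AP v : [/\ is_allocation (A v), egal v (A v) = egal v (X0 v) &
   forall X, is_allocation X -> egal v X = egal v (X0 v) -> S v X <= S v (A v)].
  have P0 : is_allocation (X0 v) && (egal v (X0 v) == egal v (X0 v)).
    by rewrite eqxx andbT; case: (X0P v).
  rewrite /A; case: (@arg_maxP _ _ _ (X0 v) (fun X => is_allocation X && (egal v X == egal v (X0 v))) (S v) P0) => X /andP [HX /eqP HE] Hmax.
  split => // Y HY HYe; apply: Hmax; rewrite HY HYe eqxx //.
have OPTE v : OPT v = egal v (X0 v).
  have [HX0 Hm] := X0P v.
  have inl : egal v (X0 v) \in [seq egal v X | X <- enum [pred X | is_allocation X]].
    by apply: map_f; rewrite mem_enum.
  apply/eqP; rewrite eq_le; apply/andP; split; last exact: seqmax_ub.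
  have : OPT v \in [seq egal v X | X <- enum [pred X | is_allocation X]].
    by apply: seqmax_mem; apply/eqP => e; rewrite e in inl.
  by case/mapP => X; rewrite mem_enum => HX ->; apply: Hm.
have key v : normalized v -> forall i, Defs.val v i setT <= S v (A v).
  case=> _ [C HC] i; rewrite HC.
  have [HA HAe HAm] := AP v.
  set Y := A v in HA HAe HAm *.
  rewrite leNgt; apply/negP => SC.
  pose f i := odflt i [pick k | Defs.val v k (Y k) < Defs.val v i (Y k)].
  have fP j : Defs.val v (f j) (Y (f j)) < Defs.val v j (Y (f j)).
    rewrite /f; case: pickP => [k //|H].
    exfalso; move: SC; apply/negP; rewrite -leNgt -(HC j) -(@val_alloc _ _ _ v _ j HA).
    by apply: ler_sum => k _; move: (H k) => /negbT; rewrite -leNgt.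
  have [g [x [gx gj]]] := @cycle_perm _ f i0.
  pose Z : {ffun 'I_m -> {set 'I_n}} := [ffun j => Y (g j)].
  have allocZ : is_allocation Z.
    move: HA => /andP [/forallP dis /eqP U]; apply/andP; split.
      apply/forallP => a; apply/forallP => b; apply/implyP => ab; rewrite !ffunE.
      have gab : g a != g b by apply: contra ab => /eqP /perm_inj ->.
      by move/forallP: (dis (g a)) => /(_ (g b)); rewrite gab.
    apply/eqP; rewrite -U [RHS](reindex_inj (@perm_inj _ g)) /=.
    by apply: eq_bigr => j _; rewrite ffunE.
  have eZ : egal v Z = egal v (X0 v).
    apply/eqP; rewrite eq_le; apply/andP; split; first by apply: (X0P v).2.
    rewrite -HAe; apply: egal_ge => // j; rewrite ffunE.
    case: (gj j) => ->; first exact: egal_le.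
    by apply: ltW; apply: le_lt_trans (fP j); apply: egal_le.
  have := HAm Z allocZ eZ; apply/negP; rewrite -ltNge.
  rewrite /S (reindex_inj (@perm_inj _ g)) /=.
  rewrite (bigD1 x) //= [X in _ < X](bigD1 x) //= ffunE.
  apply: ltr_leD; first by rewrite gx; apply: fP.
  apply: ler_sum => j _; rewrite ffunE.
  case: (gj j) => ->; first exact: lexx.
  exact: ltW (fP j).
exists A, (fun v i => Defs.val v i (A v i)).
split; first by move=> v _; case: (AP v).
split; last by move=> v _; case: (AP v) => _ -> _; rewrite OPTE.
move=> v nv i; rewrite subrr.
have [HA _ _] := AP v.
rewrite sumrB (@val_alloc _ _ _ v _ i HA).
apply: mulr_ge0_le0; first by rewrite invr_ge0 ler0n.
by rewrite subr_le0; apply: key.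
Qed.
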